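(* Let $\zeta>0$ and $1\le k<d$, and let $\alpha_1\ge\cdots\ge\alpha_k>\zeta\ge\alpha_{k+1}\ge\cdots\ge\alpha_d\ge0$. Let $\beta_1,\dots,\beta_d$ be a permutation of $\alpha_1,\dots,\alpha_d$. Define $\alpha'_i=\alpha_i$ for $i\le k$ and $\alpha'_{k+1}=\zeta$, and let $L=\min\{k,\ln(\alpha_1/\zeta)\}$. Then \[ \sum_{i=1}^d(\sqrt{\alpha_i}-\sqrt{\beta_i})^2\le4\sum_{j=1}^k\frac{\alpha'_j-\alpha'_{j+1}}{\alpha'_j}\sum_{i=1}^j(\alpha_i-\beta_i)+d\zeta+8kL\zeta. \] *)

(* Defs.v *)
From Stdlib Require Import Reals Lra Lia List Permutation.
Open Scope R_scope.

Fixpoint sum1 (n : nat) (f : nat -> R) : R :=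
  match n with
  | O => 0
  | S m => sum1 m f + f (S m)
  end.

(* alpha'_j = alpha_j for j <= k, and zeta otherwise (only used at j = k+1). *)
Definition alpha' (alpha : nat -> R) (k : nat) (zeta : R) (j : nat) : R :=
  if (j <=? k)%nat then alpha j else zeta.

(* Main.v *)
Require Import Defs.
From Stdlib Require Import Reals Lra Lia List Permutation.
Open Scope R_scope.

Lemma sum1_ext n f g : (forall i, (1 <= i <= n)%nat -> f i = g i) -> sum1 n f = sum1 n g.
Proof.
  induction n as [|n IH]; simpl; intros H; [reflexivity|].
  rewrite IH by (intros; apply H; lia). rewrite (H (S n)) by lia. reflexivity.
Qed.

Lemma sum1_le n f g : (forall i, (1 <= i <= n)%nat -> f i <= g i) -> sum1 n f <= sum1 n g.
Proof.
  induction n as [|n IH]; simpl; intros H; [lra|].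
  apply Rplus_le_compat; [apply IH; intros; apply H; lia | apply H; lia].
Qed.

Lemma sum1_plus n f g : sum1 n (fun i => f i + g i) = sum1 n f + sum1 n g.
Proof. induction n as [|n IH]; simpl; [ring| rewrite IH; ring]. Qed.

Lemma sum1_minus n f g : sum1 n (fun i => f i - g i) = sum1 n f - sum1 n g.
Proof. induction n as [|n IH]; simpl; [ring| rewrite IH; ring]. Qed.

Lemma sum1_scal n c f : sum1 n (fun i => c * f i) = c * sum1 n f.
Proof. induction n as [|n IH]; simpl; [ring| rewrite IH; ring]. Qed.

Lemma sum1_const n c : sum1 n (fun _ => c) = INR n * c.
Proof. induction n as [|n IH]; simpl sum1; [simpl; ring| rewrite IH, S_INR; ring]. Qed.

Lemma sum1_nonneg n f : (forall i, (1 <= i <= n)%nat -> 0 <= f i) -> 0 <= sum1 n f.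
Proof.
  induction n as [|n IH]; simpl; intros H; [lra|].
  assert (0 <= sum1 n f) by (apply IH; intros; apply H; lia).
  assert (0 <= f (S n)) by (apply H; lia). lra.
Qed.

Lemma sum1_cut n j f : (j <= n)%nat ->
  sum1 n (fun i => if (i <=? j)%nat then f i else 0) = sum1 j f.
Proof.
  induction n as [|n IH]; intros Hj.
  - assert (j = 0)%nat by lia; subst; reflexivity.
  - destruct (Nat.eq_dec j (S n)) as [->|Hne].
    + apply sum1_ext; intros i Hi. destruct (Nat.leb_spec i (S n)); [reflexivity|lia].
    + change (sum1 (S n) ?F) with (sum1 n F + F (S n)); cbv beta.
      rewrite IH by lia. destruct (Nat.leb_spec (S n) j); [lia|ring].
Qed.

Definition tail (j d : nat) (f : nat -> R) := sum1 d (fun i => if (j <? i)%nat then f i else 0).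

Lemma sum1_split n j f : (j <= n)%nat -> sum1 n f = sum1 j f + tail j n f.
Proof.
  intros Hj. unfold tail. rewrite <- (sum1_cut n j f Hj), <- sum1_plus.
  apply sum1_ext; intros i Hi.
  destruct (Nat.leb_spec i j); destruct (Nat.ltb_spec j i); try lia; ring.
Qed.

Lemma tail_mono k j d f : (k <= j)%nat -> (forall i, (1 <= i <= d)%nat -> 0 <= f i) ->
  tail j d f <= tail k d f.
Proof.
  intros Hkj H. unfold tail. apply sum1_le; intros i Hi.
  destruct (Nat.ltb_spec j i); destruct (Nat.ltb_spec k i); try lia; try lra. apply H; lia.
Qed.

Lemma tail_nonneg j d f : (forall i, (1 <= i <= d)%nat -> 0 <= f i) -> 0 <= tail j d f.
Proof.
  intros H; unfold tail; apply sum1_nonneg; intros i Hi.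
  destruct (j <? i)%nat; [apply H; lia| lra].
Qed.

Lemma tail_zero j d f : (forall i, (j < i <= d)%nat -> f i = 0) -> tail j d f = 0.
Proof.
  intros H; unfold tail. transitivity (sum1 d (fun _ => 0)).
  - apply sum1_ext; intros i Hi; destruct (Nat.ltb_spec j i); [apply H; lia| reflexivity].
  - rewrite sum1_const; ring.
Qed.

Lemma tail_plus j d f g : tail j d (fun i => f i + g i) = tail j d f + tail j d g.
Proof.
  unfold tail. rewrite <- sum1_plus. apply sum1_ext; intros i Hi.
  destruct (j <? i)%nat; ring.
Qed.

Lemma sum1_tele n g : sum1 n (fun j => g j - g (S j)) = g 1%nat - g (S n).
Proof. induction n as [|n IH]; simpl; [ring| rewrite IH; ring]. Qed.

Lemma sum1_tele' n g : sum1 n (fun j => g (S j) - g j) = g (S n) - g 1%nat.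
Proof. induction n as [|n IH]; simpl; [ring| rewrite IH; ring]. Qed.

Lemma abel n u v : sum1 n (fun i => u i * v i) =
  sum1 n (fun j => (u j - u (S j)) * sum1 j v) + u (S n) * sum1 n v.
Proof. induction n as [|n IH]; simpl; [ring| rewrite IH; ring]. Qed.

Lemma sum1_swap n m F : sum1 n (fun j => sum1 m (fun i => F j i)) =
  sum1 m (fun i => sum1 n (fun j => F j i)).
Proof.
  induction n as [|n IH]; simpl.
  - rewrite sum1_const; ring.
  - rewrite IH, <- sum1_plus. reflexivity.
Qed.

Lemma fr_app l1 l2 : fold_right Rplus 0 (l1 ++ l2) = fold_right Rplus 0 l1 + fold_right Rplus 0 l2.
Proof. induction l1 as [|x l IH]; simpl; [ring| rewrite IH; ring]. Qed.

Lemma sum1_list n h : sum1 n h = fold_right Rplus 0 (map h (seq 1 n)).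
Proof.
  induction n as [|n IH]; [reflexivity|].
  rewrite seq_S, map_app, fr_app. simpl sum1. rewrite IH. simpl. ring.
Qed.

Lemma fr_perm (l1 l2 : list R) : Permutation l1 l2 -> fold_right Rplus 0 l1 = fold_right Rplus 0 l2.
Proof. induction 1; simpl; lra. Qed.

Lemma perm_sum d (a b : nat -> R) (f : R -> R) :
  Permutation (map a (seq 1 d)) (map b (seq 1 d)) ->
  sum1 d (fun i => f (a i)) = sum1 d (fun i => f (b i)).
Proof.
  intros H. rewrite !sum1_list. rewrite <- (map_map a f), <- (map_map b f).
  apply fr_perm, Permutation_map, H.
Qed.

Lemma perm_in d (a b : nat -> R) : Permutation (map a (seq 1 d)) (map b (seq 1 d)) ->
  forall i, (1 <= i <= d)%nat -> exists m, (1 <= m <= d)%nat /\ b i = a m.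
Proof.
  intros H i Hi.
  assert (Hin : In (b i) (map a (seq 1 d))).
  { apply Permutation_in with (map b (seq 1 d)); [apply Permutation_sym; exact H|].
    apply in_map, in_seq; lia. }
  apply in_map_iff in Hin as [m [Hm Hm']]. apply in_seq in Hm'. exists m; split; [lia| auto].
Qed.

Lemma mono d (a : nat -> R) : (forall i, (1 <= i)%nat -> (i < d)%nat -> a (S i) <= a i) ->
  forall i j, (1 <= i)%nat -> (i <= j)%nat -> (j <= d)%nat -> a j <= a i.
Proof.
  intros H i j Hi Hij Hj. induction j as [|j IH]; [lia|].
  destruct (Nat.eq_dec i (S j)) as [->|Hne]; [lra|].
  apply Rle_trans with (a j); [apply H; lia| apply IH; lia].
Qed.

Lemma D1 d j (a b : nat -> R)
  (Hperm : forall f : R -> R, sum1 d (fun i => f (a i)) = sum1 d (fun i => f (b i)))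
  (Hmono : forall i j, (1 <= i)%nat -> (i <= j)%nat -> (j <= d)%nat -> a j <= a i)
  (Hpos : forall i, (1 <= i <= d)%nat -> 0 <= a i)
  (Hj : (1 <= j <= d)%nat) :
  sqrt (a j) * sum1 j (fun i => sqrt (a i) - sqrt (b i)) <= sum1 j (fun i => a i - b i).
Proof.
  set (c := sqrt (a j)).
  assert (Hc : 0 <= c) by apply sqrt_pos.
  pose (phi := fun x => x - c * sqrt x).
  assert (Hsgn1 : forall x, a j <= x -> 0 <= phi x).
  { intros x Hx. unfold phi. assert (0 <= a j) by (apply Hpos; lia).
    assert (Hs : c <= sqrt x) by (apply sqrt_le_1_alt; auto).
    rewrite <- (sqrt_sqrt x) at 1 by lra. nra. }
  assert (Hsgn2 : forall x, 0 <= x -> x <= a j -> phi x <= 0).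
  { intros x H0 Hx. unfold phi. 
    assert (Hs : sqrt x <= c) by (apply sqrt_le_1_alt; auto).
    rewrite <- (sqrt_sqrt x) at 1 by lra. pose proof (sqrt_pos x). nra. }
  assert (Hkey : sum1 j (fun i => phi (b i)) <= sum1 j (fun i => phi (a i))).
  { apply Rle_trans with (sum1 j (fun i => Rmax (phi (b i)) 0)).
    { apply sum1_le; intros; apply Rmax_l. }
    apply Rle_trans with (sum1 d (fun i => Rmax (phi (b i)) 0)).
    { rewrite (sum1_split d j (fun i => Rmax (phi (b i)) 0)) by lia.
      assert (0 <= tail j d (fun i => Rmax (phi (b i)) 0)) by (apply tail_nonneg; intros; apply Rmax_r).
      lra. }
    pose proof (Hperm (fun x => Rmax (phi x) 0)) as Hp. cbv beta in Hp. rewrite <- Hp.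
    rewrite (sum1_split d j) by lia.
    rewrite tail_zero.
    2:{ intros i Hi. apply Rmax_right. apply Hsgn2; [apply Hpos; lia| apply Hmono; lia]. }
    rewrite Rplus_0_r. apply Req_le. apply sum1_ext; intros i Hi. apply Rmax_left.
    apply Hsgn1. apply Hmono; lia. }
  assert (Eq : sum1 j (fun i => a i - b i) - c * sum1 j (fun i => sqrt (a i) - sqrt (b i))
     = sum1 j (fun i => phi (a i)) - sum1 j (fun i => phi (b i))).
  { rewrite <- sum1_scal, <- !sum1_minus. apply sum1_ext; intros; unfold phi; ring. }
  lra.
Qed.

Lemma D2 d k j (z : R) (a b : nat -> R)
  (Hperm : forall f : R -> R, sum1 d (fun i => f (a i)) = sum1 d (fun i => f (b i)))
  (Hz : 0 <= z)
  (Hsmall : forall i, (k < i <= d)%nat -> a i <= z)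
  (Hj : (k <= j <= d)%nat) :
  sum1 j (fun i => sqrt (a i) - sqrt (b i)) <=
  INR d / 2 * sqrt z + tail k d (fun i => Rmax (sqrt (b i) - sqrt z) 0).
Proof.
  set (r := sqrt z).
  assert (Hr : 0 <= r) by apply sqrt_pos.
  pose (M := fun x => Rmin (sqrt x) r).
  pose (P := fun x => Rmax (sqrt x - r) 0).
  assert (Hdec : forall x, sqrt x = M x + P x).
  { intros x; unfold M, P, Rmin, Rmax. destruct (Rle_dec (sqrt x) r); destruct (Rle_dec (sqrt x - r) 0); lra. }
  assert (HM0 : forall x, 0 <= M x) by (intros; apply Rmin_glb; [apply sqrt_pos|auto]).
  assert (HMr : forall x, M x <= r) by (intros; apply Rmin_r).
  assert (HD : sum1 j (fun i => sqrt (a i) - sqrt (b i)) =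
     sum1 j (fun i => M (a i) - M (b i)) + (sum1 j (fun i => P (a i)) - sum1 j (fun i => P (b i)))).
  { rewrite <- sum1_minus, <- sum1_plus. apply sum1_ext; intros i _.
    rewrite (Hdec (a i)), (Hdec (b i)). ring. }
  set (X := sum1 j (fun i => M (a i) - M (b i))).
  assert (HX1 : X <= INR j * r).
  { unfold X. rewrite <- sum1_const. apply sum1_le; intros i _.
    specialize (HM0 (b i)); specialize (HMr (a i)); lra. }
  assert (HX2 : X <= (INR d - INR j) * r).
  { assert (H0 : sum1 d (fun i => M (a i) - M (b i)) = 0).
    { rewrite sum1_minus. pose proof (Hperm M) as Hp. cbv beta in Hp. rewrite Hp. ring. }
    rewrite (sum1_split d j) in H0 by lia. fold X in H0.
    assert (Hc : sum1 d (fun _ => r) = sum1 j (fun _ => r) + tail j d (fun _ => r))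
      by (apply sum1_split; lia).
    rewrite !sum1_const in Hc.
    assert (Ht : 0 <= tail j d (fun i => (M (a i) - M (b i)) + r)).
    { apply tail_nonneg; intros i _. specialize (HM0 (a i)); specialize (HMr (b i)); lra. }
    rewrite tail_plus in Ht. nra. }
  assert (HP : sum1 j (fun i => P (a i)) - sum1 j (fun i => P (b i)) <= tail k d (fun i => P (b i))).
  { assert (Ha : sum1 d (fun i => P (a i)) = sum1 j (fun i => P (a i))).
    { rewrite (sum1_split d j) by lia. rewrite tail_zero; [ring|].
      intros i Hi. unfold P. apply Rmax_right.
      assert (sqrt (a i) <= r) by (apply sqrt_le_1_alt; apply Hsmall; lia). lra. }
    pose proof (Hperm P) as Hp. cbv beta in Hp. rewrite Hp in Ha.
    rewrite (sum1_split d j) in Ha by lia.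
    assert (tail j d (fun i => P (b i)) <= tail k d (fun i => P (b i))).
    { apply tail_mono; [lia|]. intros; unfold P; apply Rmax_r. }
    lra. }
  rewrite HD. change (tail k d (fun i => Rmax (sqrt (b i) - r) 0)) with (tail k d (fun i => P (b i))). assert (X <= INR d / 2 * r). { clear -HX1 HX2. lra. } fold X. lra.
Qed.

Lemma Sgen d j y (a b : nat -> R)
  (Hperm : forall f : R -> R, sum1 d (fun i => f (a i)) = sum1 d (fun i => f (b i)))
  (Hj : (j <= d)%nat)
  (Hup : forall i, (1 <= i <= j)%nat -> y <= a i)
  (Hlo : forall i, (j < i <= d)%nat -> a i <= y) :
  tail j d (fun i => Rmax (b i - y) 0) <= sum1 j (fun i => a i - b i).
Proof.
  pose (Q := fun x => Rmax (x - y) 0).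
  assert (H1 : sum1 j (fun i => Q (a i) - Q (b i)) <= sum1 j (fun i => a i - b i)).
  { apply sum1_le; intros i Hi. unfold Q. rewrite Rmax_left by (specialize (Hup i Hi); lra).
    pose proof (Rmax_l (b i - y) 0). lra. }
  rewrite sum1_minus in H1.
  assert (Ha : sum1 d (fun i => Q (a i)) = sum1 j (fun i => Q (a i))).
  { rewrite (sum1_split d j) by lia. rewrite tail_zero; [ring|].
    intros i Hi. unfold Q. apply Rmax_right. specialize (Hlo i Hi). lra. }
  pose proof (Hperm Q) as Hp. cbv beta in Hp. rewrite Hp in Ha.
  rewrite (sum1_split d j) in Ha by lia.
  change (tail j d (fun i => Rmax (b i - y) 0)) with (tail j d (fun i => Q (b i))). lra.
Qed.

Lemma step (c c' x : R) : 0 < c' -> c' <= c -> 0 <= x ->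
  (Rmax (sqrt x - sqrt c') 0)^2 - (Rmax (sqrt x - sqrt c) 0)^2 <= (c - c') / c * Rmax (x - c') 0.
Proof.
  intros H1 H2 H3.
  assert (Hp : sqrt c * sqrt c = c) by (apply sqrt_sqrt; lra).
  assert (Hq : sqrt c' * sqrt c' = c') by (apply sqrt_sqrt; lra).
  assert (HX : sqrt x * sqrt x = x) by (apply sqrt_sqrt; lra).
  assert (q0 : 0 < sqrt c') by (apply sqrt_lt_R0; lra).
  assert (Hqp : sqrt c' <= sqrt c) by (apply sqrt_le_1_alt; lra).
  assert (X0 : 0 <= sqrt x) by apply sqrt_pos.
  assert (Hc : 0 < c) by lra.
  apply (Rmult_le_reg_r c); [lra|].
  replace ((c - c')/c * Rmax (x - c') 0 * c) with ((c - c') * Rmax (x - c') 0) by (field; lra).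
  set (p := sqrt c) in *. set (q := sqrt c') in *. set (X := sqrt x) in *.
  rewrite <- Hp, <- Hq, <- HX.
  destruct (Rle_dec X q) as [Hxq|Hxq].
  - rewrite (Rmax_right (X - q)) by lra. rewrite (Rmax_right (X - p)) by lra.
    rewrite (Rmax_right (X*X - q*q)) by nra. lra.
  - destruct (Rle_dec X p) as [Hxp|Hxp].
    + rewrite (Rmax_left (X - q)) by lra. rewrite (Rmax_right (X - p)) by lra.
      rewrite (Rmax_left (X*X - q*q)) by nra.
      assert (E : (p*p - q*q) * (X*X - q*q) - ((X - q)^2 - 0^2) * (p*p)
                  = (X-q)*q*(2*p*p - q*X - q*q)) by ring.
      assert (0 <= (X-q)*q*(2*p*p - q*X - q*q)).
      { apply Rmult_le_pos; [apply Rmult_le_pos; lra| nra]. }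
      lra.
    + rewrite (Rmax_left (X - q)) by lra. rewrite (Rmax_left (X - p)) by lra.
      rewrite (Rmax_left (X*X - q*q)) by nra.
      assert (E : (p*p - q*q) * (X*X - q*q) - ((X - q)^2 - (X - p)^2) * (p*p)
                  = (p-q)*((p+q)*(X-p)^2 + 2*p*q*(X-p) + q*(p-q)*(2*p+q))) by ring.
      assert (0 <= (p-q)*((p+q)*(X-p)^2 + 2*p*q*(X-p) + q*(p-q)*(2*p+q))).
      { apply Rmult_le_pos; [lra|].
        assert (0 <= (p+q)*(X-p)^2) by (apply Rmult_le_pos; [lra| apply pow2_ge_0]).
        assert (0 <= 2*p*q*(X-p)) by (apply Rmult_le_pos; [nra| lra]).
        assert (0 <= q*(p-q)*(2*p+q)) by (apply Rmult_le_pos; [apply Rmult_le_pos|]; lra).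
        lra. }
      lra.
Qed.

Lemma chain k (z x : R) (a : nat -> R) (Hk : (1 <= k)%nat) (Hz : 0 < z)
  (Hbig : forall i, (1 <= i <= k)%nat -> z < a i)
  (Hmono : forall j, (1 <= j)%nat -> (j < k)%nat -> a (S j) <= a j)
  (Hx0 : 0 <= x) (Hx1 : x <= a 1%nat) :
  (Rmax (sqrt x - sqrt z) 0)^2 <= sum1 k (fun j =>
     (alpha' a k z j - alpha' a k z (S j)) / alpha' a k z j * Rmax (x - alpha' a k z (S j)) 0).
Proof.
  pose (G := fun c => (Rmax (sqrt x - sqrt c) 0)^2).
  apply Rle_trans with (sum1 k (fun j => G (alpha' a k z (S j)) - G (alpha' a k z j))).
  - rewrite (sum1_tele' k (fun j => G (alpha' a k z j))).
    unfold G, alpha'.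
    replace ((S k <=? k)%nat) with false by (symmetry; apply Nat.leb_gt; lia).
    replace ((1 <=? k)%nat) with true by (symmetry; apply Nat.leb_le; lia).
    rewrite (Rmax_right (sqrt x - sqrt (a 1%nat))).
    + lra.
    + assert (sqrt x <= sqrt (a 1%nat)) by (apply sqrt_le_1_alt; auto). lra.
  - apply sum1_le; intros j Hj. unfold G.
    assert (F1 : 0 < alpha' a k z (S j) /\ alpha' a k z (S j) <= alpha' a k z j).
    { unfold alpha'. destruct (Nat.leb_spec (S j) k); destruct (Nat.leb_spec j k); try lia.
      - assert (z < a (S j)) by (apply Hbig; lia). split; [lra| apply Hmono; lia].
      - assert (j = k) by lia. subst. assert (z < a k) by (apply Hbig; lia). split; lra. }
    apply step; [tauto| tauto| auto].
Qed.

Lemma ln_ge t : 0 < t -> 1 - / t <= ln t.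
Proof.
  intros Ht. pose proof (exp_ineq1_le (- ln t)) as H.
  rewrite exp_Ropp, exp_ln in H by auto. lra.
Qed.

Lemma PI (z x a1 kk : R) (Hz : 0 < z) (Hza : z < a1) (Hk : 1 <= kk) (Hx0 : 0 <= x) (Hx1 : x <= a1) :
  2 * sqrt z * Rmax (sqrt x - sqrt z) 0 <=
  2 * (Rmax (sqrt x - sqrt z) 0)^2 + 8 * Rmin kk (ln (a1 / z)) * z * (if Rlt_dec z x then 1 else 0).
Proof.
  assert (Hl : 0 < ln (a1 / z)).
  { assert (0 < a1 / z) by (apply Rdiv_lt_0_compat; lra).
    pose proof (ln_ge (a1 / z) H).
    replace (/ (a1 / z)) with (z / a1) in H0 by (field; lra).
    assert (z / a1 < 1). { apply (Rmult_lt_reg_r a1); [lra|]. replace (z / a1 * a1) with z by (field; lra). lra. }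
    lra. }
  assert (HL : 0 <= Rmin kk (ln (a1 / z))) by (apply Rmin_glb; lra).
  set (L := Rmin kk (ln (a1 / z))) in *.
  assert (Hr : sqrt z * sqrt z = z) by (apply sqrt_sqrt; lra).
  assert (Hr0 : 0 < sqrt z) by (apply sqrt_lt_R0; lra).
  assert (HX : sqrt x * sqrt x = x) by (apply sqrt_sqrt; lra).
  destruct (Rlt_dec z x) as [Hzx|Hzx].
  - assert (Hlt : sqrt z < sqrt x) by (apply sqrt_lt_1; lra).
    rewrite Rmax_left by lra.
    set (r := sqrt z) in *. set (X := sqrt x) in *.
    destruct (Rle_dec r (X - r)) as [Hs|Hs].
    + assert (0 <= L * z) by (apply Rmult_le_pos; lra). nra.
    + assert (HLs : (X - r) / (2 * r) <= L).
      { unfold L. apply Rmin_glb.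
        - assert ((X - r) / (2*r) <= 1/2).
          { apply (Rmult_le_reg_r (2*r)); [lra|].
            replace ((X - r) / (2 * r) * (2 * r)) with (X - r) by (field; lra). lra. }
          lra.
        - apply Rle_trans with (ln (x / z)).
          + apply Rle_trans with (1 - / (x / z)); [| apply ln_ge; apply Rdiv_lt_0_compat; lra].
            replace (/ (x / z)) with (z / x) by (field; lra).
            rewrite <- Hr, <- HX.
            assert (E : 1 - r * r / (X * X) - (X - r) / (2 * r)
                        = (X - r) * (3 * r * r - (X - r) * (X - r)) / (2 * r * (X * X))) by (field; lra).
            assert (0 <= (X - r) * (3 * r * r - (X - r) * (X - r)) / (2 * r * (X * X))).
            { unfold Rdiv; apply Rmult_le_pos; [apply Rmult_le_pos; nra| apply Rlt_le, Rinv_0_lt_compat; nra]. }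
            lra.
          + destruct (Rle_lt_or_eq_dec x a1 Hx1) as [Hxa|Hxa].
            * left. apply ln_increasing; [apply Rdiv_lt_0_compat; lra|].
              unfold Rdiv. apply Rmult_lt_compat_r; [apply Rinv_0_lt_compat; lra| lra].
            * rewrite Hxa; lra. }
      assert (E2 : (X - r) / (2 * r) * z = (X - r) * r / 2) by (rewrite <- Hr; field; lra).
      assert (L * z >= (X - r) * r / 2).
      { rewrite <- E2. apply Rle_ge, Rmult_le_compat_r; lra. }
      nra.
  - assert (sqrt x <= sqrt z) by (apply sqrt_le_1_alt; lra).
    rewrite Rmax_right by lra. lra.
Qed.

Lemma arith1 c q D S : 0 < c -> 0 <= q <= c -> c * D <= S -> 0 <= S ->
  (c - q) * D <= (c * c - q * q) / (c * c) * S.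
Proof.
  intros Hc Hq HD HS.
  apply (Rmult_le_reg_r (c * c)); [nra|].
  replace ((c * c - q * q) / (c * c) * S * (c * c)) with ((c * c - q * q) * S) by (field; lra).
  assert ((c - q) * c * (c * D) <= (c - q) * c * S) by (apply Rmult_le_compat_l; nra).
  assert ((c - q) * c * S <= (c - q) * (c + q) * S) by (apply Rmult_le_compat_r; [auto| nra]).
  nra.
Qed.

Theorem mainTheorem16 (d k : nat) (zeta : R) (alpha beta : nat -> R)
  (hzeta : 0 < zeta)
  (hk1 : (1 <= k)%nat) (hkd : (k < d)%nat)
  (hsorted : forall i : nat, (1 <= i)%nat -> (i < d)%nat -> alpha (S i) <= alpha i)
  (hk : zeta < alpha k)
  (hk' : alpha (S k) <= zeta)
  (hd : 0 <= alpha d)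
  (hperm : Permutation (map alpha (seq 1 d)) (map beta (seq 1 d))) :
  sum1 d (fun i => (sqrt (alpha i) - sqrt (beta i)) ^ 2)
  <= 4 * sum1 k (fun j =>
           (alpha' alpha k zeta j - alpha' alpha k zeta (S j)) / alpha' alpha k zeta j
           * sum1 j (fun i => alpha i - beta i))
     + INR d * zeta
     + 8 * INR k * Rmin (INR k) (ln (alpha 1%nat / zeta)) * zeta.
Proof.
  pose proof (mono d alpha hsorted) as Hmono.
  assert (Hperm : forall f : R -> R, sum1 d (fun i => f (alpha i)) = sum1 d (fun i => f (beta i)))
    by (intros f; apply perm_sum; exact hperm).
  assert (Hbig : forall i, (1 <= i <= k)%nat -> zeta < alpha i).
  { intros i Hi. apply Rlt_le_trans with (alpha k); [auto| apply Hmono; lia]. }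
  assert (Hsmall : forall i, (k < i <= d)%nat -> alpha i <= zeta).
  { intros i Hi. apply Rle_trans with (alpha (S k)); [apply Hmono; lia| auto]. }
  assert (Hpos : forall i, (1 <= i <= d)%nat -> 0 <= alpha i).
  { intros i Hi. apply Rle_trans with (alpha d); [auto| apply Hmono; lia]. }
  assert (Ha1 : forall i, (1 <= i <= d)%nat -> alpha i <= alpha 1%nat) by (intros; apply Hmono; lia).
  assert (Hb : forall i, (1 <= i <= d)%nat -> 0 <= beta i /\ beta i <= alpha 1%nat).
  { intros i Hi. destruct (perm_in d alpha beta hperm i Hi) as [m [Hm ->]].
    split; [apply Hpos| apply Ha1]; lia. }
  assert (Hz1 : zeta < alpha 1%nat) by (apply Hbig; lia).
  pose (w := fun j => (alpha' alpha k zeta j - alpha' alpha k zeta (S j)) / alpha' alpha k zeta j).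
  pose (W := sum1 k (fun j => w j * sum1 j (fun i => alpha i - beta i))).
  pose (L := Rmin (INR k) (ln (alpha 1%nat / zeta))).
  pose (E := tail k d (fun i => Rmax (sqrt (beta i) - sqrt zeta) 0)).
  assert (Hw : forall j, (1 <= j <= k)%nat -> 0 <= w j).
  { intros j Hj. unfold w, alpha'. destruct (Nat.leb_spec (S j) k); destruct (Nat.leb_spec j k); try lia.
    - assert (zeta < alpha j) by (apply Hbig; lia). assert (alpha (S j) <= alpha j) by (apply Hmono; lia).
      unfold Rdiv. apply Rmult_le_pos; [lra| apply Rlt_le, Rinv_0_lt_compat; lra].
    - assert (zeta < alpha j) by (apply Hbig; lia).
      unfold Rdiv. apply Rmult_le_pos; [lra| apply Rlt_le, Rinv_0_lt_compat; lra]. }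
  assert (HS : forall j, (1 <= j <= k)%nat ->
     tail k d (fun i => Rmax (beta i - alpha' alpha k zeta (S j)) 0) <= sum1 j (fun i => alpha i - beta i)).
  { intros j Hj. apply Rle_trans with (tail j d (fun i => Rmax (beta i - alpha' alpha k zeta (S j)) 0)).
    - apply tail_mono; [lia| intros; apply Rmax_r].
    - apply (Sgen d j); [exact Hperm| lia| |]; unfold alpha'; destruct (Nat.leb_spec (S j) k).
      + intros i Hi. apply Hmono; lia.
      + intros i Hi. apply Rlt_le, Hbig; lia.
      + intros i Hi. apply Hmono; lia.
      + intros i Hi. apply Hsmall; lia. }
  assert (HS0 : forall j, (1 <= j <= k)%nat -> 0 <= sum1 j (fun i => alpha i - beta i)).
  { intros j Hj. eapply Rle_trans; [| apply HS; auto]. apply tail_nonneg; intros; apply Rmax_r. }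
  assert (Hslack : 2 * sqrt zeta * E <= 2 * W + 8 * INR k * L * zeta).
  { pose (Q := fun j i => Rmax (beta i - alpha' alpha k zeta (S j)) 0).
    assert (HW1 : sum1 k (fun j => w j * tail k d (fun i => Q j i)) <= W).
    { unfold W; apply sum1_le; intros j Hj. apply Rmult_le_compat_l; [apply Hw; auto| apply HS; auto]. }
    assert (HW2 : sum1 k (fun j => w j * tail k d (fun i => Q j i)) =
                  tail k d (fun i => sum1 k (fun j => w j * Q j i))).
    { unfold tail.
      transitivity (sum1 k (fun j => sum1 d (fun i => w j * (if (k <? i)%nat then Q j i else 0)))).
      { apply sum1_ext; intros j _. rewrite sum1_scal. reflexivity. }
      rewrite sum1_swap. apply sum1_ext; intros i _.
      destruct (k <? i)%nat; [reflexivity|].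
      transitivity (sum1 k (fun _ => 0)); [apply sum1_ext; intros; ring| rewrite sum1_const; ring]. }
    pose (ind := fun x => if Rlt_dec zeta x then 1 else 0).
    assert (Hcnt : tail k d (fun i => ind (beta i)) <= INR k).
    { assert (H0 : 0 <= sum1 k (fun i => ind (beta i))).
      { apply sum1_nonneg; intros; unfold ind; destruct (Rlt_dec zeta (beta i)); lra. }
      pose proof (sum1_split d k (fun i => ind (beta i))) as Hsp.
      pose proof (Hperm ind) as Hp. cbv beta in Hp.
      assert (Hc : sum1 d (fun i => ind (alpha i)) = INR k).
      { transitivity (sum1 d (fun i => if (i <=? k)%nat then 1 else 0)).
        - apply sum1_ext; intros i Hi. unfold ind. destruct (Nat.leb_spec i k).
          + destruct (Rlt_dec zeta (alpha i)); [auto|]. exfalso; apply n; apply Hbig; lia.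
          + destruct (Rlt_dec zeta (alpha i)); [|auto]. exfalso.
            assert (alpha i <= zeta) by (apply Hsmall; lia). lra.
        - rewrite sum1_cut by lia. rewrite sum1_const. ring. }
      assert (k <= d)%nat by lia. specialize (Hsp H). lra. }
    assert (Hper : forall i, (1 <= i <= d)%nat ->
      2 * sqrt zeta * Rmax (sqrt (beta i) - sqrt zeta) 0 <=
      2 * sum1 k (fun j => w j * Q j i) + 8 * L * zeta * ind (beta i)).
    { intros i Hi. destruct (Hb i Hi) as [Hb0 Hb1].
      pose proof (chain k zeta (beta i) alpha hk1 hzeta Hbig (fun j Hj Hjk => hsorted j Hj ltac:(lia)) Hb0 Hb1) as Hch.
      assert (1 <= INR k) by (apply (le_INR 1); lia).
      pose proof (PI zeta (beta i) (alpha 1%nat) (INR k) hzeta Hz1 H Hb0 Hb1) as Hpi.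
      unfold w, Q, L, ind. lra. }
    assert (HE : 2 * sqrt zeta * E <= 2 * tail k d (fun i => sum1 k (fun j => w j * Q j i)) + 8 * L * zeta * tail k d (fun i => ind (beta i))).
    { unfold E, tail. rewrite <- !sum1_scal, <- sum1_plus. apply sum1_le; intros i Hi.
      destruct (k <? i)%nat; [apply Hper; auto| lra]. }
    assert (0 <= L * zeta).
    { apply Rmult_le_pos; [|lra]. unfold L. apply Rmin_glb.
      - apply (le_INR 0); lia.
      - assert (0 < alpha 1%nat / zeta) by (apply Rdiv_lt_0_compat; lra).
        pose proof (ln_ge _ H). replace (/ (alpha 1%nat / zeta)) with (zeta / alpha 1%nat) in H0 by (field; lra).
        assert (zeta / alpha 1%nat <= 1).
        { apply (Rmult_le_reg_r (alpha 1%nat)); [lra|]. replace (zeta / alpha 1%nat * alpha 1%nat) with zeta by (field; lra). lra. }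
        lra. }
    assert (8 * L * zeta * tail k d (fun i => ind (beta i)) <= 8 * INR k * L * zeta).
    { replace (8 * L * zeta * tail k d (fun i => ind (beta i))) with (8 * (L * zeta) * tail k d (fun i => ind (beta i))) by ring.
      replace (8 * INR k * L * zeta) with (8 * (L * zeta) * INR k) by ring.
      apply Rmult_le_compat_l; [lra| auto]. }
    lra. }
  pose (e := fun j => if (j <=? d)%nat then sqrt (Rmin (alpha j) zeta) else 0).
  pose (B := INR d / 2 * sqrt zeta + E).
  assert (HE0 : 0 <= E) by (apply tail_nonneg; intros; apply Rmax_r).
  assert (HB : 0 <= B).
  { unfold B. assert (0 <= INR d) by apply pos_INR. pose proof (sqrt_pos zeta).
    assert (0 <= INR d / 2 * sqrt zeta) by (apply Rmult_le_pos; lra). lra. }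
  assert (HDd : sum1 d (fun i => sqrt (alpha i) - sqrt (beta i)) = 0)
    by (rewrite sum1_minus, (Hperm sqrt); ring).
  assert (HDB : forall j, (k <= j <= d)%nat -> sum1 j (fun i => sqrt (alpha i) - sqrt (beta i)) <= B).
  { intros j Hj. apply (D2 d k j zeta alpha beta Hperm); auto; lra. }
  assert (HPJ : forall j, (1 <= j <= d)%nat ->
    (sqrt (alpha j) - sqrt (alpha (S j))) * sum1 j (fun i => sqrt (alpha i) - sqrt (beta i))
    <= (if (j <=? k)%nat then w j * sum1 j (fun i => alpha i - beta i) else 0) + B * (e j - e (S j))).
  { intros j Hj.
    pose proof (sqrt_pos (alpha (S j))) as Hq0.
    assert (Hsq : forall i, (1 <= i <= d)%nat -> sqrt (alpha i) * sqrt (alpha i) = alpha i)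
      by (intros; apply sqrt_sqrt; apply Hpos; auto).
    unfold e.
    destruct (Nat.ltb_spec j k) as [Hjk|Hjk].
    - replace ((j <=? k)%nat) with true by (symmetry; apply Nat.leb_le; lia).
      replace ((j <=? d)%nat) with true by (symmetry; apply Nat.leb_le; lia).
      replace ((S j <=? d)%nat) with true by (symmetry; apply Nat.leb_le; lia).
      rewrite (Rmin_right (alpha j)) by (apply Rlt_le, Hbig; lia).
      rewrite (Rmin_right (alpha (S j))) by (apply Rlt_le, Hbig; lia).
      assert (Hwj : w j = (sqrt (alpha j) * sqrt (alpha j) - sqrt (alpha (S j)) * sqrt (alpha (S j)))
                          / (sqrt (alpha j) * sqrt (alpha j))).
      { rewrite !Hsq by lia. unfold w, alpha'.
        replace ((j <=? k)%nat) with true by (symmetry; apply Nat.leb_le; lia).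
        replace ((S j <=? k)%nat) with true by (symmetry; apply Nat.leb_le; lia). reflexivity. }
      rewrite Hwj.
      assert (Hc : 0 < sqrt (alpha j)) by (apply sqrt_lt_R0; apply Rlt_trans with zeta; [lra| apply Hbig; lia]).
      assert (Hqc : sqrt (alpha (S j)) <= sqrt (alpha j)) by (apply sqrt_le_1_alt; apply Hmono; lia).
      pose proof (D1 d j alpha beta Hperm Hmono Hpos ltac:(lia)) as HD1.
      pose proof (arith1 _ _ _ _ Hc (conj Hq0 Hqc) HD1 (HS0 j ltac:(lia))).
      lra.
    - destruct (Nat.eq_dec j k) as [->|Hne].
      + rewrite Nat.leb_refl.
        replace ((k <=? d)%nat) with true by (symmetry; apply Nat.leb_le; lia).
        replace ((S k <=? d)%nat) with true by (symmetry; apply Nat.leb_le; lia).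
        rewrite (Rmin_right (alpha k)) by lra.
        rewrite (Rmin_left (alpha (S k))) by lra.
        assert (Hwk : w k = (sqrt (alpha k) * sqrt (alpha k) - sqrt zeta * sqrt zeta)
                          / (sqrt (alpha k) * sqrt (alpha k))).
        { rewrite !Hsq by lia. rewrite sqrt_sqrt by lra. unfold w, alpha'.
          rewrite Nat.leb_refl.
          replace ((S k <=? k)%nat) with false by (symmetry; apply Nat.leb_gt; lia). reflexivity. }
        rewrite Hwk.
        assert (Hc : 0 < sqrt (alpha k)) by (apply sqrt_lt_R0; lra).
        assert (Hrc : sqrt zeta <= sqrt (alpha k)) by (apply sqrt_le_1_alt; lra).
        assert (Hqr : sqrt (alpha (S k)) <= sqrt zeta) by (apply sqrt_le_1_alt; lra).
        pose proof (sqrt_pos zeta).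
        pose proof (D1 d k alpha beta Hperm Hmono Hpos ltac:(lia)) as HD1.
        pose proof (arith1 _ _ _ _ Hc (conj H Hrc) HD1 (HS0 k ltac:(lia))).
        pose proof (HDB k ltac:(lia)).
        assert ((sqrt zeta - sqrt (alpha (S k))) * sum1 k (fun i => sqrt (alpha i) - sqrt (beta i))
                <= (sqrt zeta - sqrt (alpha (S k))) * B) by (apply Rmult_le_compat_l; lra).
        lra.
      + replace ((j <=? k)%nat) with false by (symmetry; apply Nat.leb_gt; lia).
        replace ((j <=? d)%nat) with true by (symmetry; apply Nat.leb_le; lia).
        rewrite (Rmin_left (alpha j)) by (apply Hsmall; lia).
        destruct (Nat.leb_spec (S j) d).
        * rewrite (Rmin_left (alpha (S j))) by (apply Hsmall; lia).
          assert (Hqc : sqrt (alpha (S j)) <= sqrt (alpha j)) by (apply sqrt_le_1_alt; apply Hmono; lia).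
          pose proof (HDB j ltac:(lia)).
          assert ((sqrt (alpha j) - sqrt (alpha (S j))) * sum1 j (fun i => sqrt (alpha i) - sqrt (beta i))
                  <= (sqrt (alpha j) - sqrt (alpha (S j))) * B) by (apply Rmult_le_compat_l; lra).
          lra.
        * assert (j = d) by lia. subst j. rewrite HDd.
          pose proof (sqrt_pos (alpha d)).
          assert (0 <= B * (sqrt (alpha d) - 0)) by (apply Rmult_le_pos; lra).
          lra. }
  assert (HA : sum1 d (fun i => (sqrt (alpha i) - sqrt (beta i)) ^ 2) =
               2 * sum1 d (fun i => sqrt (alpha i) * (sqrt (alpha i) - sqrt (beta i)))).
  { transitivity (sum1 d (fun i => 2 * (sqrt (alpha i) * (sqrt (alpha i) - sqrt (beta i))) + (beta i - alpha i))).
    - apply sum1_ext; intros i Hi.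
      assert (H1 : sqrt (alpha i) * sqrt (alpha i) = alpha i) by (apply sqrt_sqrt; apply Hpos; auto).
      assert (H2 : sqrt (beta i) * sqrt (beta i) = beta i) by (apply sqrt_sqrt; apply Hb; auto).
      replace (beta i - alpha i) with (sqrt (beta i) * sqrt (beta i) - sqrt (alpha i) * sqrt (alpha i))
        by (rewrite H1, H2; ring). ring.
    - rewrite sum1_plus, sum1_scal, sum1_minus.
      assert (Hp : sum1 d alpha = sum1 d beta) by exact (Hperm (fun x => x)).
      rewrite ?Hp. ring. }
  pose proof (abel d (fun i => sqrt (alpha i)) (fun i => sqrt (alpha i) - sqrt (beta i))) as Hab.
  cbv beta in Hab. rewrite HDd, Rmult_0_r, Rplus_0_r in Hab.
  assert (Hmain : sum1 d (fun i => sqrt (alpha i) * (sqrt (alpha i) - sqrt (beta i))) <= W + B * sqrt zeta).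
  { rewrite Hab.
    eapply Rle_trans; [apply sum1_le; exact HPJ|].
    rewrite sum1_plus, sum1_cut by lia. rewrite sum1_scal, sum1_tele.
    unfold e. replace ((1 <=? d)%nat) with true by (symmetry; apply Nat.leb_le; lia).
    replace ((S d <=? d)%nat) with false by (symmetry; apply Nat.leb_gt; lia).
    rewrite Rmin_right by lra. unfold W. lra. }
  rewrite HA.
  change (sum1 k (fun j => (alpha' alpha k zeta j - alpha' alpha k zeta (S j)) / alpha' alpha k zeta j
           * sum1 j (fun i => alpha i - beta i))) with W.
  fold L.
  assert (Hz2 : sqrt zeta * sqrt zeta = zeta) by (apply sqrt_sqrt; lra).
  assert (Eq : 2 * (W + B * sqrt zeta) = 2 * W + INR d * (sqrt zeta * sqrt zeta) + 2 * sqrt zeta * E)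
    by (unfold B; field).
  rewrite Hz2 in Eq. lra.
Qed.
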